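(* Let $n\ge 2$. No smooth Frobenius nonclassical hypersurface $X\subset\mathbb{P}^n$ over $\mathbb{F}_q$ of degree $q+2$ has separated variables.
   Context: A hypersurface $X=\{F=0\}\subset\mathbb{P}^n$ over $\mathbb{F}_q$ ($F$ homogeneous) is Frobenius nonclassical if $F$ divides $\sum_{i=0}^n x_i^q\frac{\partial F}{\partial x_i}$. $X$ has separated variables if, after a projective linear change of coordinates over $\mathbb{F}_q$, $F=G(x_0,\dots,x_m)+H(x_{m+1},\dots,x_n)$ for some $m\in\{0,\dots,n-1\}$. *)

(* Defs.v *)
From HB Require Import structures.
From mathcomp Require Import all_boot all_order all_algebra all_field.
From mathcomp Require Export mpoly.
Set Implicit Arguments. Unset Strict Implicit. Unset Printing Implicit Defensive.
Import Order.TTheory GRing.Theory.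
Local Open Scope ring_scope.

(* Homogeneous coordinates x_0..x_n are the variables 'X_i, i : 'I_(n.+1). *)

Definition frob_nonclassical (K : finFieldType) (n : nat)
    (F : {mpoly K[n.+1]}) : Prop :=
  exists G : {mpoly K[n.+1]},
    \sum_(i < n.+1) 'X_i ^+ #|K| * mderiv i F = G * F.

(* Smoothness of the hypersurface {F = 0}: no geometric point (over any
   algebraically closed field L containing K) at which F and all its
   partial derivatives vanish. *)
Definition smooth_hypersurface (K : fieldType) (n : nat)
    (F : {mpoly K[n.+1]}) : Prop :=
  forall (L : closedFieldType) (f : {rmorphism K -> L}) (x : 'I_(n.+1) -> L),
    (exists i, x i != 0) ->
    ~ ((map_mpoly f F).@[x] = 0 /\
       forall i : 'I_(n.+1), (map_mpoly f (mderiv i F)).@[x] = 0).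

Definition vars_in (K : ringType) (n : nat) (P : pred 'I_n)
    (p : {mpoly K[n]}) : Prop :=
  forall m, m \in msupp p -> forall i : 'I_n, (m i != 0)%N -> P i.

Definition lin_subst (K : ringType) (n : nat) (A : 'M[K]_n) : n.-tuple {mpoly K[n]} :=
  [tuple \sum_(j < n) (A i j)%:MP * 'X_j | i < n].

Definition separated_variables (K : fieldType) (n : nat)
    (F : {mpoly K[n.+1]}) : Prop :=
  exists (A : 'M[K]_(n.+1)) (m : nat) (G H : {mpoly K[n.+1]}),
    [/\ A \in unitmx, (m < n)%N,
        vars_in (fun i : 'I_(n.+1) => (i <= m)%N) G,
        vars_in (fun i : 'I_(n.+1) => (m < i)%N) H &
        F \mPo lin_subst A = G + H].

(* Main.v *)
Require Import Defs.
From HB Require Import structures.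
From mathcomp Require Import all_boot all_order all_algebra all_field.
From mathcomp Require Import mpoly.
From mathcomp Require pgroup abelian.
From mathcomp Require Import zify.
Set Implicit Arguments. Unset Strict Implicit. Unset Printing Implicit Defensive.
Import GRing.Theory.
Local Open Scope ring_scope.

Lemma card_pnat (K : finFieldType) : {p | p \in [pchar K] & p.-nat #|K|}.
Proof.
have [p pr_p pc] := finPcharP K.
exists p => //.
have := abelian.abelem_pgroup (abelian.fin_ring_pchar_abelem pc).
by rewrite pgroup.pgroupE cardsT.
Qed.

Lemma card_gt1 (K : finFieldType) : (1 < #|K|)%N.
Proof. exact: finNzRing_gt1. Qed.

Lemma card_natr0 (K : finFieldType) : (#|K|%:R : K) = 0.
Proof.
have [p pc pn] := card_pnat K; have [k hk] := p_natP pn.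
have := card_gt1 K; rewrite hk natrX (pcharf0 pc).
by case: k {hk} => [|k]; rewrite ?expn0 // expr0n.
Qed.

Section Chain.
Variables (R : comRingType) (N : nat) (A : 'M[R]_N).
Implicit Types (p q : {mpoly R[N]}).
Local Notation L := (lin_subst A).

Lemma compXU i : 'X_i \mPo L = \sum_j (A i j)%:MP * 'X_j.
Proof. by rewrite comp_mpolyXU -tnth_nth tnth_mktuple. Qed.

Lemma mderivXU k i : mderiv k ('X_i : {mpoly R[N]}) = (i == k)%:R.
Proof.
rewrite mderivX mnm1E; case: eqP => [->|_]; last by rewrite scale0r.
have -> : (U_(k) - U_(k))%MM = 0%MM :> 'X_{1..N} by apply/mnmP => j; rewrite !mnmE subnn.
by rewrite mpolyX0 scale1r.
Qed.

Definition Pch p := forall k, mderiv k (p \mPo L) =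
  \sum_(i < N) A i k *: (mderiv i p \mPo L).

Lemma Pch1 : Pch 1.
Proof.
move=> k; rewrite rmorph1 -mpolyC1 mderivC big1 // => i _.
by rewrite mderivC comp_mpolyC mpolyC0 scaler0.
Qed.

Lemma PchM p q : Pch p -> Pch q -> Pch (p * q).
Proof.
move=> hp hq k; rewrite rmorphM mderivM hp hq mulr_suml mulr_sumr -big_split /=.
apply: eq_bigr => i _; rewrite mderivM rmorphD !rmorphM scalerDr.
by rewrite -scalerAl -scalerAr.
Qed.

Lemma PchX j : Pch 'X_j.
Proof.
move=> k; rewrite compXU raddf_sum /=.
rewrite (eq_bigr (fun l => (A j l)%:MP * (l == k)%:R)); last first.
  by move=> l _; rewrite mderiv_mulC mderivXU.
rewrite (bigD1 k) //= eqxx mulr1 big1 ?addr0; last first.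
  by move=> l /negbTE ->; rewrite mulr0.
rewrite (bigD1 j) //= mderivXU eqxx rmorph1 big1 ?addr0; last first.
  by move=> i; rewrite eq_sym mderivXU => /negbTE ->; rewrite rmorph0 scaler0.
by rewrite -mul_mpolyC mulr1.
Qed.

Lemma PchXm m : Pch 'X_[m].
Proof.
rewrite mpolyXE_id; apply: big_ind => //; first exact: Pch1.
  exact: PchM.
move=> i _; elim: (m i) => [|e ih]; first by rewrite expr0; exact: Pch1.
by rewrite exprS; apply: PchM => //; exact: PchX.
Qed.

Lemma PchD p q : Pch p -> Pch q -> Pch (p + q).
Proof.
move=> hp hq k; rewrite comp_mpolyD mderivD hp hq -big_split /=.
by apply: eq_bigr => i _; rewrite mderivD comp_mpolyD scalerDr.
Qed.

Lemma PchZ c p : Pch p -> Pch (c *: p).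
Proof.
move=> hp k; rewrite comp_mpolyZ mderivZ hp scaler_sumr.
by apply: eq_bigr => i _; rewrite mderivZ comp_mpolyZ !scalerA mulrC.
Qed.

Lemma Pch0 : Pch 0.
Proof.
move=> k; rewrite comp_mpoly0 mderiv0 big1 // => i _.
by rewrite mderiv0 comp_mpoly0 scaler0.
Qed.

Lemma chain p : Pch p.
Proof.
rewrite (mpolyE p); apply: big_ind; [exact: Pch0 | exact: PchD |].
by move=> m _; apply: PchZ; apply: PchXm.
Qed.

End Chain.

Section Frob.
Variables (K : finFieldType) (N : nat) (A : 'M[K]_N).
Local Notation q := #|K|.
Local Notation L := (lin_subst A).

Lemma mpoly_pnat : [pchar {mpoly K[N]}].-nat q.
Proof.
have [p pc pn] := card_pnat K.
have pc' : p \in [pchar {mpoly K[N]}] by apply: (rmorph_pchar (@mpolyC N K)).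
apply: sub_in_pnat pn => r _; rewrite inE => /eqP ->; exact: pc'.
Qed.

Lemma frob_sum (s : 'I_N -> {mpoly K[N]}) :
  (\sum_i s i) ^+ q = \sum_i (s i) ^+ q.
Proof.
apply: (big_morph (fun x : {mpoly K[N]} => x ^+ q)).
  by move=> x y; apply: exprDn_pchar; exact: mpoly_pnat.
by rewrite expr0n; case: q (card_gt1 K).
Qed.

Lemma linX_frob i : ('X_i ^+ q) \mPo L = \sum_k (A i k)%:MP * 'X_k ^+ q.
Proof.
rewrite rmorphXn /= compXU frob_sum; apply: eq_bigr => k _.
by rewrite exprMn -rmorphXn /= expf_card.
Qed.

Lemma Phi_comp (F C : {mpoly K[N]}) :
  \sum_i 'X_i ^+ q * mderiv i F = C * F ->
  \sum_k 'X_k ^+ q * mderiv k (F \mPo L) = (C \mPo L) * (F \mPo L).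
Proof.
move=> h; rewrite -rmorphM -h rmorph_sum /=.
under eq_bigr => k _ do rewrite chain mulr_sumr.
rewrite exchange_big /=; apply: eq_bigr => i _.
rewrite rmorphM /= linX_frob mulr_suml; apply: eq_bigr => k _.
by rewrite -scalerAr -mul_mpolyC !mulrA [_ * 'X_k ^+ _]mulrC.
Qed.

End Frob.
Lemma homog_comp (R : comRingType) N (A : 'M[R]_N) (F : {mpoly R[N]}) d :
  F \is d.-homog -> F \mPo lin_subst A \is d.-homog.
Proof.
move=> /dhomogP hF; rewrite comp_mpolyEX big_seq; apply: rpred_sum => m hm.
apply: rpredZ; rewrite comp_mpolyX.
suff h : \prod_(i < N) tnth (lin_subst A) i ^+ m i \is (\sum_i m i)%N.-homog.
  by move: h; rewrite -mdegE (hF m hm).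
apply: (big_ind2 (fun (p : {mpoly R[N]}) (e : nat) => p \is e.-homog)).
- exact: dhomog1.
- by move=> x1 x2 y1 y2 h1 h2; apply: dhomogM.
move=> i _; rewrite -[X in X.-homog]mul1n; apply: dhomogMn.
rewrite tnth_mktuple; apply: rpred_sum => j _; rewrite mul_mpolyC; apply: rpredZ.
rewrite dhomogX; apply/eqP; apply: mdeg1.
Qed.
Section Mnm.
Variable N : nat.
Implicit Types (m a b : 'X_{1..N}).

Definition pureb (S : pred 'I_N) a := [forall j, (0 < a j)%N ==> S j].

Lemma purebP (S : pred 'I_N) a : reflect (forall j, (0 < a j)%N -> S j) (pureb S a).
Proof.
by apply: (iffP forallP) => h j; [exact/implyP | apply/implyP; exact: h].
Qed.

Lemma mdeg_le a b : (a <= b)%MM -> (mdeg a <= mdeg b)%N.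
Proof. by move/mnm_lepP => h; rewrite !mdegE; apply: leq_sum => i _; exact: h. Qed.

Lemma mdeg_sub a b : (a <= b)%MM -> mdeg (b - a)%MM = (mdeg b - mdeg a)%N.
Proof. by move=> le; rewrite -{2}(submK le) mdegD addnK. Qed.

Lemma mdeg_eq_le a b : (a <= b)%MM -> mdeg a = mdeg b -> a = b.
Proof.
move=> le e; have := mdeg_sub le; rewrite e subnn => /eqP; rewrite mdeg_eq0 => /eqP h.
by rewrite -(submK le) h add0m.
Qed.

Lemma coord_le_mdeg a j : (a j <= mdeg a)%N.
Proof. by rewrite mdegE (bigD1 j) //= leq_addr. Qed.

Lemma mdeg_pos_ex a : (0 < mdeg a)%N -> exists j, (0 < a j)%N.
Proof.
move=> h; apply/existsP; apply: contraTT h => /existsPn h.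
by rewrite mdegE big1 // => j _; move: (h j); rewrite lt0n negbK => /eqP.
Qed.

End Mnm.

Ltac mnm_solve := apply/mnmP => jj; rewrite ?(mnmDE, mnmBE, mulmnE, mnm1E, mnm0E);
  repeat match goal with |- context [?x == ?y] => case: (x =P y) => ? end; subst => //=; lia.
Section Coef.
Variables (R : comRingType) (N : nat).
Implicit Types (P C : {mpoly R[N]}).

Lemma coefXM P (mu nu : 'X_{1..N}) :
  ('X_[mu] * P)@_nu = if (mu <= nu)%MM then P@_(nu - mu) else 0.
Proof.
case: ifP => h.
  by rewrite -{1}(submK h) addmC mulrC mcoeffMX.
apply/memN_msupp_eq0; rewrite mulrC (perm_mem (msuppMX P mu)).
by apply/mapP => -[m' _ E]; move: h; rewrite E lem_addr.
Qed.

Lemma coefM C P nu : (C * P)@_nu =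
  \sum_(d <- msupp P) P@_d * (if (d <= nu)%MM then C@_(nu - d) else 0).
Proof.
rewrite {1}(mpolyE P) mulr_sumr raddf_sum /=; apply: eq_bigr => d _.
by rewrite -scalerAr mcoeffZ [C * _]mulrC coefXM.
Qed.

Lemma XU i : 'X_i = 'X_[U_(i)%MM] :> {mpoly R[N]}.
Proof. by []. Qed.

Lemma coefPhi (q : nat) P nu :
  (\sum_(k < N) 'X_k ^+ q * mderiv k P)@_nu =
  \sum_(k < N) (if (U_(k) *+ q <= nu)%MM then
      P@_((nu - U_(k) *+ q) + U_(k))%MM *+ ((nu - U_(k) *+ q)%MM k).+1 else 0).
Proof.
rewrite raddf_sum /=; apply: eq_bigr => k _.
rewrite mpolyXn coefXM; case: ifP => // _.
by rewrite mcoeff_mderiv.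
Qed.

End Coef.

Section Coeffs.
Variables (K : fieldType) (N : nat) (S : pred 'I_N) (P C : {mpoly K[N]}) (q : nat).
Hypotheses (hq : (1 < q)%N) (hqK : (q%:R : K) = 0)
  (hdeg : forall a, a \in msupp P -> mdeg a = (q + 2)%N)
  (hpure : forall a, a \in msupp P -> pureb S a || pureb (predC S) a)
  (hPhi : \sum_(k < N) 'X_k ^+ q * mderiv k P = C * P).

Lemma mixed0 (a : 'X_{1..N}) j1 j2 : S j1 -> ~~ S j2 -> (0 < a j1)%N -> (0 < a j2)%N -> P@_a = 0.
Proof.
move=> s1 s2 a1 a2; apply/memN_msupp_eq0/negP => /hpure /orP [] /purebP h.
  by move/negP: s2; apply; apply: h.
by move: (h j1 a1); rewrite /= s1.
Qed.

Section Mu.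
Variables (mu : 'X_{1..N}) (hmu : mu \in msupp P) (hmuS : pureb (predC S) mu).

Lemma C_vanish g : pureb S g -> mdeg g = q.-1 -> C@_g = 0.
Proof.
move=> /purebP pg dg; have /purebP pmu := hmuS.
have := congr1 (mcoeff (g + mu)%MM) hPhi; rewrite coefPhi coefM.
rewrite big1; last first.
  move=> k _; case: ifP => // /mnm_lepP le.
  have [j gj] : exists j, (0 < g j)%N by apply: mdeg_pos_ex; rewrite dg; lia.
  have Sj := pg j gj.
  have nSk : ~~ S k.
    apply/negP => Sk; have := le k; rewrite mulmnE mnm1E eqxx mnmDE.
    have -> : mu k = 0%N.
      by apply/eqP; rewrite -leqn0 leqNgt; apply/negP => /pmu /=; rewrite Sk.
    have := coord_le_mdeg g k; rewrite dg; lia.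
  have jk : (k == j) = false by apply/negP => /eqP E; move: nSk; rewrite E Sj.
  rewrite (mixed0 (j1 := j) (j2 := k)) ?mul0rn //.
    by rewrite !(mnmDE, mnmBE, mulmnE, mnm1E) jk; lia.
  by have := le k; rewrite !(mnmDE, mnmBE, mulmnE, mnm1E) eqxx; lia.
rewrite (bigD1_seq mu) ?msupp_uniq //= lem_addl addmK big1_seq ?addr0; last first.
  move=> d /andP [ne hd]; case: ifP => le; last by rewrite mulr0.
  exfalso; move/mnm_lepP: le => le.
  case/orP: (hpure hd) => /purebP pd.
    have : (mdeg d <= mdeg g)%N.
      apply/mdeg_le/mnm_lepP => j; case: (posnP (d j)) => [-> //|dj].
      have Sj := pd j dj; have := le j; rewrite mnmDE.
      have -> : mu j = 0%N.
        by apply/eqP; rewrite -leqn0 leqNgt; apply/negP => /pmu /=; rewrite Sj.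
      by rewrite addn0.
    by rewrite (hdeg hd) dg; lia.
  have ed : d = mu.
    apply: mdeg_eq_le; last by rewrite (hdeg hd) (hdeg hmu).
    apply/mnm_lepP => j; case: (posnP (d j)) => [-> //|dj].
    have Sj := pd j dj; have := le j; rewrite mnmDE.
    have -> : g j = 0%N.
      by apply/eqP; rewrite -leqn0 leqNgt; apply/negP => /pg; move: Sj => /= /negbTE ->.
    by rewrite add0n.
  by move: ne; rewrite ed eqxx.
move/esym/eqP; rewrite mulf_eq0 => /orP [] /eqP // h.
by move: hmu; rewrite mcoeff_msupp h eqxx.
Qed.

Lemma CP_vanish nu : pureb S nu -> mdeg nu = (2 * q + 1)%N -> (C * P)@_nu = 0.
Proof.
move=> /purebP pn dn; rewrite coefM big1_seq // => d /andP [_ hd].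
case: ifP => le; last by rewrite mulr0.
rewrite C_vanish ?mulr0 //.
  apply/purebP => j; rewrite mnmBE => h; apply: pn; lia.
by rewrite mdeg_sub // dn (hdeg hd); lia.
Qed.

Lemma fact_a i0 : S i0 -> P@_(U_(i0) *+ (q + 2))%MM *+ (q + 2) = 0.
Proof.
move=> Si0.
have := congr1 (mcoeff (U_(i0) *+ (2 * q + 1))%MM) hPhi; rewrite coefPhi CP_vanish; first last.
- by rewrite mdegMn mdeg1 mul1n.
- by apply/purebP => j; rewrite mulmnE mnm1E; case: eqP => [<- //|]; rewrite mul0n.
rewrite (bigD1 i0) //= big1 ?addr0; last first.
  move=> k nek; case: ifP => // /mnm_lepP /(_ k).
  by rewrite !mulmnE !mnm1E eqxx eq_sym (negbTE nek); lia.
have -> : (U_(i0) *+ q <= U_(i0) *+ (2 * q + 1))%MM.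
  by apply/mnm_lepP => j; rewrite !mulmnE; apply: leq_mul => //; lia.
have -> : (U_(i0) *+ (2 * q + 1) - U_(i0) *+ q + U_(i0))%MM = (U_(i0) *+ (q + 2))%MM.
  by mnm_solve.
by rewrite mnmBE !mulmnE mnm1E eqxx; have -> : ((1 * (2 * q + 1) - 1 * q).+1 = q + 2)%N by lia.
Qed.

Lemma fact_b i0 i : S i0 -> S i -> i != i0 -> P@_(U_(i0) *+ (q + 1) + U_(i))%MM = 0.
Proof.
move=> Si0 Si nei.
have := congr1 (mcoeff (U_(i0) *+ (2 * q) + U_(i))%MM) hPhi; rewrite coefPhi CP_vanish; first last.
- by rewrite mdegD mdegMn !mdeg1 mul1n.
- apply/purebP => j; rewrite mnmDE mulmnE !mnm1E.
  by case: eqP => [<- //|]; case: eqP => [<- //|]; rewrite mul0n.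
rewrite (bigD1 i0) //= big1 ?addr0; last first.
  move=> k nek; case: ifP => // /mnm_lepP /(_ k).
  rewrite mnmDE !mulmnE !mnm1E eqxx eq_sym (negbTE nek) mul0n add0n.
  by case: (i == k); lia.
have -> : (U_(i0) *+ q <= U_(i0) *+ (2 * q) + U_(i))%MM.
  apply/mnm_lepP => j; rewrite mnmDE !mulmnE; apply: leq_trans (leq_addr _ _).
  by apply: leq_mul => //; lia.
have -> : (U_(i0) *+ (2 * q) + U_(i) - U_(i0) *+ q + U_(i0))%MM = (U_(i0) *+ (q + 1) + U_(i))%MM.
  by mnm_solve.
rewrite mnmBE mnmDE !mulmnE !mnm1E eqxx (negbTE nei).
have -> : ((true * (2 * q) + false - true * q).+1 = q + 1)%N by rewrite /=; lia.
by rewrite mulrnDr -mulr_natr hqK mulr0 add0r mulr1n.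
Qed.

End Mu.
End Coeffs.

Section Sing.
Variables (L : closedFieldType) (N : nat) (S : pred 'I_N) (P : {mpoly L[N]}) (d : nat).
Hypotheses (hd : (1 < d)%N)
  (hdeg : forall a, a \in msupp P -> mdeg a = d)
  (hpure : forall a, a \in msupp P -> pureb S a || pureb (predC S) a).

Lemma evalZ (Q : {mpoly L[N]}) (y : 'I_N -> L) (Z : pred 'I_N) :
  (forall k, Z k -> y k = 0) ->
  (forall b, b \in msupp Q -> exists k, Z k && (0 < b k)%N) -> Q.@[y] = 0.
Proof.
move=> hy hb; rewrite mevalE big1_seq // => b /andP [_ /hb [k /andP [zk bk]]].
by rewrite (bigD1 k) //= hy // expr0n (gtn_eqF bk) mul0r mulr0.
Qed.

Lemma deriv_supp (Q : {mpoly L[N]}) i b :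
  b \in msupp (mderiv i Q) -> (b + U_(i))%MM \in msupp Q.
Proof. by rewrite !mcoeff_msupp mcoeff_mderiv; apply: contraNneq => ->; rewrite mul0rn. Qed.

Lemma mdeg_deriv i b : b \in msupp (mderiv i P) -> mdeg b = d.-1.
Proof. by move/deriv_supp/hdeg; rewrite mdegD mdeg1; lia. Qed.

Lemma cone (T : pred 'I_N) (y : 'I_N -> L) :
  (forall k, T k -> y k = 0) -> (forall a, a \in msupp P -> pureb T a) ->
  P.@[y] = 0 /\ forall i, (mderiv i P).@[y] = 0.
Proof.
move=> hy hp; split => [|i].
  apply: (evalZ hy) => b hb; have [k bk] : exists k, (0 < b k)%N.
    by apply: mdeg_pos_ex; rewrite (hdeg hb); lia.
  by exists k; rewrite bk andbT; apply: (elimT (purebP _ _) (hp _ hb)).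
apply: (evalZ hy) => b hb; have [k bk] : exists k, (0 < b k)%N.
  by apply: mdeg_pos_ex; rewrite (mdeg_deriv hb); lia.
exists k; rewrite bk andbT; apply: (elimT (purebP _ _) (hp _ (deriv_supp hb))).
by rewrite mnmDE; lia.
Qed.

Lemma single (c : 'X_{1..N}) (i : 'I_N) e :
  (forall k, k != i -> c k = 0%N) -> mdeg c = e -> c = (U_(i) *+ e)%MM.
Proof.
move=> h dc; have ci : c i = e.
  by rewrite -dc mdegE (bigD1 i) //= big1 ?addn0 // => k; apply: h.
apply/mnmP => k; rewrite mulmnE mnm1E; case: eqP => [<-|/eqP ne]; first by rewrite ci mul1n.
by rewrite mul0n h // eq_sym.
Qed.

Lemma half (S' : pred 'I_N) (i0 j0 : 'I_N) : S' i0 -> ~~ S' j0 ->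
  P@_(U_(i0) *+ d)%MM *+ d = 0 ->
  (forall i, S' i -> i != i0 -> P@_(U_(i0) *+ d.-1 + U_(i))%MM = 0) ->
  forall i b, b \in msupp (mderiv i P) -> pureb S' (b + U_(i))%MM ->
  (forall k, k != i0 -> k != j0 -> b k = 0%N) -> False.
Proof.
move=> Si0 nSj0 ha hb i b hbi /purebP pa hz.
have bj0 : b j0 = 0%N.
  apply/eqP; rewrite -leqn0 leqNgt; apply/negP => bj.
  by move/negP: nSj0; apply; apply: pa; rewrite mnmDE; lia.
have eb : b = (U_(i0) *+ d.-1)%MM.
  apply: single; last exact: mdeg_deriv hbi.
  by move=> k nk; case: (k =P j0) => [->//|/eqP nj]; apply: hz.
have Si : S' i by apply: pa; rewrite mnmDE mnm1E eqxx; lia.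
move: hbi; rewrite mcoeff_msupp mcoeff_mderiv.
case: (i =P i0) => [ei|/eqP nei].
  have -> : (b + U_(i))%MM = (U_(i0) *+ d)%MM by rewrite eb ei; mnm_solve.
  have -> : (b i).+1 = d by rewrite eb ei mulmnE mnm1E eqxx; lia.
  by rewrite ha eqxx.
by rewrite eb hb // mul0rn eqxx.
Qed.

Lemma sing_point (i0 j0 : 'I_N) : S i0 -> ~~ S j0 ->
  ((exists2 mu, mu \in msupp P & pureb (predC S) mu) ->
     P@_(U_(i0) *+ d)%MM *+ d = 0 /\
     (forall i, S i -> i != i0 -> P@_(U_(i0) *+ d.-1 + U_(i))%MM = 0)) ->
  ((exists2 mu, mu \in msupp P & pureb S mu) ->
     P@_(U_(j0) *+ d)%MM *+ d = 0 /\
     (forall i, ~~ S i -> i != j0 -> P@_(U_(j0) *+ d.-1 + U_(i))%MM = 0)) ->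
  exists y : 'I_N -> L, (exists i, y i != 0) /\ P.@[y] = 0 /\
     forall i, (mderiv i P).@[y] = 0.
Proof.
move=> Si0 nSj0 HA HB.
have ij : i0 != j0 by apply: contraNneq nSj0 => <-.
have ji : (j0 == i0) = false by rewrite eq_sym (negbTE ij).
case: (boolP (has (pureb (predC S)) (msupp P))) => [/hasP [mu m1 m2]|/hasPn nE]; last first.
  exists (fun k => (k == j0)%:R); split; first by exists j0; rewrite eqxx oner_eq0.
  apply: (cone (T := S)) => [k Sk|a ha].
    by case: eqP => // ek; move: nSj0; rewrite -ek Sk.
  by have := hpure ha; rewrite (negbTE (nE a ha)) orbF.
case: (boolP (has (pureb S) (msupp P))) => [/hasP [nu n1 n2]|/hasPn nE]; last first.
  exists (fun k => (k == i0)%:R); split; first by exists i0; rewrite eqxx oner_eq0.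
  apply: (cone (T := predC S)) => [k /= nSk|a ha].
    by case: eqP => // ek; move: nSk; rewrite ek Si0.
  by have := hpure ha; rewrite (negbTE (nE a ha)).
have [ha hb] := HA (ex_intro2 _ _ mu m1 m2).
have [hc0 hf] := HB (ex_intro2 _ _ nu n1 n2).
set a := P@_(U_(i0) *+ d)%MM; set b := P@_(U_(j0) *+ d)%MM.
have [s [t [st0 stE]]] : exists s t : L, (s != 0 \/ t != 0) /\ a * s ^+ d + b * t ^+ d = 0.
  case: (a =P 0) => [a0|/eqP a0].
    by exists 1, 0; rewrite a0 mul0r expr0n /= gtn_eqF 1?ltnW // mulr0 addr0 oner_eq0; split; [left|].
  have [x hx] := @solve_monicpoly L d (fun i => if i == 0%N then - b / a else 0) (ltnW hd).
  exists x, 1; split; first by right; rewrite oner_eq0.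
  move: hx; rewrite -(prednK (ltnW hd)) big_ord_recl /= big1 ?addr0 ?expr0 ?mulr1 => [hx|i _]; last by rewrite mul0r.
  by rewrite expr1n mulr1 hx mulrC divfK // addrC subrr.
pose y k := if k == i0 then s else if k == j0 then t else 0.
have Zy : forall k, (k != i0) && (k != j0) -> y k = 0.
  by move=> k /andP [/negbTE k1 /negbTE k2]; rewrite /y k1 k2.
exists y; split.
  by case: st0 => [sn|tn]; [exists i0 | exists j0]; rewrite /y ?eqxx ?ji.
split; last first.
  move=> i; apply: (evalZ Zy) => c hc; case: (boolP [exists k, ((k != i0) && (k != j0)) && (0 < c k)%N]) => [/existsP //|/existsPn hz]; exfalso.
  have hz' : forall k, k != i0 -> k != j0 -> c k = 0%N.
    move=> k k1 k2; have := hz k; rewrite k1 k2 /= lt0n negbK => /eqP //.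
  case/orP: (hpure (deriv_supp hc)) => hp.
    exact: (half Si0 nSj0 ha hb hc hp hz').
  apply: (half (S' := predC S) (i0 := j0) (j0 := i0) _ _ hc0 hf hc hp) => //.
  - by rewrite /= negbK.
  - by move=> k k1 k2; apply: hz'.
pose Q := P - (a *: 'X_[U_(i0) *+ d] + b *: 'X_[U_(j0) *+ d]).
have hQ : Q.@[y] = 0.
  apply: (evalZ Zy) => c hc; case: (boolP [exists k, ((k != i0) && (k != j0)) && (0 < c k)%N]) => [/existsP //|/existsPn hz]; exfalso.
  have hz' : forall k, k != i0 -> k != j0 -> c k = 0%N.
    move=> k k1 k2; have := hz k; rewrite k1 k2 /= lt0n negbK => /eqP //.
  have dij : (U_(i0) *+ d)%MM != (U_(j0) *+ d)%MM.
    apply/negP => /eqP /(congr1 (fun m : 'X_{1..N} => m i0)); rewrite !mulmnE !mnm1E eqxx.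
    by rewrite ji; lia.
  move: hc; rewrite mcoeff_msupp !(mcoeffB, mcoeffD, mcoeffZ, mcoeffX).
  have cP : P@_c != 0 -> c \in msupp P by rewrite mcoeff_msupp.
  have dji : (U_(j0) *+ d == U_(i0) *+ d)%MM = false by rewrite eq_sym (negbTE dij).
  case: (c =P U_(i0) *+ d)%MM => [->|nc1]; first by rewrite eqxx dji mulr1 mulr0 addr0 subrr eqxx => /negbTE.
  case: (c =P U_(j0) *+ d)%MM => [->|nc2]; first by rewrite eqxx (negbTE dij) mulr1 mulr0 add0r subrr eqxx => /negbTE.
  have e1 : (U_(i0) *+ d == c)%MM = false by apply/eqP => E; apply: nc1.
  have e2 : (U_(j0) *+ d == c)%MM = false by apply/eqP => E; apply: nc2.
  rewrite e1 e2 !mulr0 addr0 subr0 => /cP hcP.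
  case/orP: (hpure hcP) => /purebP hp.
    apply: nc1; apply: single; last exact: hdeg.
    move=> k nk; case: (k =P j0) => [->|/eqP nj]; last exact: hz'.
    apply/eqP; rewrite -leqn0 leqNgt; apply/negP => /hp; exact/negP.
  apply: nc2; apply: single; last exact: hdeg.
  move=> k nk; case: (k =P i0) => [->|/eqP nj]; last by apply: hz'.
  apply/eqP; rewrite -leqn0 leqNgt; apply/negP => /hp /=; by rewrite Si0.
have -> : P.@[y] = Q.@[y] + (a *: 'X_[U_(i0) *+ d] + b *: 'X_[U_(j0) *+ d]).@[y].
  by rewrite -mevalD /Q subrK.
rewrite hQ add0r mevalD !mevalZ -!mpolyXn !rmorphXn /= !mevalXU.
by rewrite /y eqxx ji eqxx.
Qed.

End Sing.


Lemma map_CX (R S : comRingType) (f : {additive R -> S}) N (c : R) (j : 'I_N) :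
  map_mpoly f (c%:MP * 'X_j) = (f c)%:MP * 'X_j.
Proof.
apply/mpolyP => m; rewrite mcoeff_map_mpoly !mcoeffCM !mcoeffX.
by case: (_ == m); rewrite ?mulr1 ?mulr0 ?raddf0.
Qed.

Lemma map_lin_eval (R S : comRingType) (f : {rmorphism R -> S}) N (a : 'I_N -> R) (y : 'I_N -> S) :
 (map_mpoly f (\sum_j (a j)%:MP * 'X_j)).@[y] = \sum_j f (a j) * y j.
Proof.
rewrite (raddf_sum (map_mpoly f)) (rmorph_sum (meval y)).
apply: eq_bigr => j _.
rewrite /= map_CX mevalM mevalC.
by rewrite mevalXU.
Qed.

Lemma map_comp_eval (R S : comRingType) (f : {rmorphism R -> S}) (hf : injective f) N
  (Q : {mpoly R[N]}) (t : N.-tuple {mpoly R[N]}) (y : 'I_N -> S) :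
  (map_mpoly f (Q \mPo t)).@[y] = (map_mpoly f Q).@[fun i => (map_mpoly f (tnth t i)).@[y]].
Proof.
rewrite map_mpoly_comp // comp_mpoly_meval; apply: meval_eq => i.
by rewrite tnth_map.
Qed.

Lemma map_sumZ_eval (R S : comRingType) (f : {rmorphism R -> S}) N
  (c : 'I_N -> R) (Q : 'I_N -> {mpoly R[N]}) (y : 'I_N -> S) :
  (map_mpoly f (\sum_i c i *: Q i)).@[y] = \sum_i f (c i) * (map_mpoly f (Q i)).@[y].
Proof.
rewrite (raddf_sum (map_mpoly f)) (rmorph_sum (meval y)).
by apply: eq_bigr => i _ /=; rewrite map_mpolyZ mevalZ.
Qed.

Lemma map_mderiv (R S : comRingType) (f : {rmorphism R -> S}) N i (p : {mpoly R[N]}) :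
  map_mpoly f (mderiv i p) = mderiv i (map_mpoly f p).
Proof.
by apply/mpolyP => m; rewrite mcoeff_map_mpoly !mcoeff_mderiv mcoeff_map_mpoly raddfMn.
Qed.

Lemma pureb_CC N (S : pred 'I_N) a : pureb (predC (predC S)) a = pureb S a.
Proof. by apply: eq_forallb => j; rewrite /= negbK. Qed.

Unset Implicit Arguments.

Theorem lemma5p1 (K : finFieldType) (n : nat) (F : {mpoly K[n.+1]}) :
  (2 <= n)%N ->
  F != 0 ->
  F \is (#|K| + 2)%N.-homog ->
  smooth_hypersurface F ->
  frob_nonclassical F ->
  ~ separated_variables F.
Proof.
move=> _ _ hF hsm [C hC] [A [m [G [H [hA hm hG hH hsep]]]]].
set q := #|K| in hF hC.
have hq : (1 < q)%N by exact: card_gt1.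
have hqK : (q%:R : K) = 0 by exact: card_natr0.
pose F' := F \mPo lin_subst A.
have hPhi := Phi_comp A hC.
have hdeg : forall a, a \in msupp F' -> mdeg a = (q + 2)%N.
  by apply/dhomogP; apply: homog_comp.
pose S : pred 'I_(n.+1) := fun i => (i <= m)%N.
have hpure : forall a, a \in msupp F' -> pureb S a || pureb (predC S) a.
  move=> a; rewrite /F' hsep => /msuppD_le; rewrite mem_cat => /orP [] ha; apply/orP; [left|right];
    apply/purebP => j aj.
    exact: (hG a ha j (lt0n_neq0 aj)).
  by rewrite /= /S -ltnNge; exact: (hH a ha j (lt0n_neq0 aj)).
have hpure' : forall a, a \in msupp F' -> pureb (predC S) a || pureb (predC (predC S)) a.
  by move=> a ha; rewrite pureb_CC orbC; exact: hpure.
pose i0 : 'I_(n.+1) := ord0.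
have hj0 : (m.+1 < n.+1)%N by rewrite ltnS.
pose j0 : 'I_(n.+1) := Ordinal hj0.
have Si0 : S i0 by [].
have nSj0 : ~~ S j0 by rewrite /S /= ltnn.
have [Lc [f _]] := countable_algebraic_closure K.
pose P := map_mpoly f F'.
have inj_f : injective f := fmorph_inj f.
have mP : forall a, (a \in msupp P) = (a \in msupp F').
  by move=> a; apply: perm_mem; apply: msupp_map_mpoly.
have [y [ynz [Py dPy]]] : exists y : 'I_(n.+1) -> Lc, (exists i, y i != 0) /\ P.@[y] = 0 /\
     forall i, (mderiv i P).@[y] = 0.
  apply: (@sing_point Lc n.+1 S P (q + 2) _ _ _ i0 j0 Si0 nSj0).
  - by rewrite addn2.
  - by move=> a; rewrite mP; exact: hdeg.
  - by move=> a; rewrite mP; exact: hpure.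
  - move=> [mu]; rewrite mP => hmu hmuS.
    rewrite !mcoeff_map_mpoly -raddfMn (fact_a hq hdeg hpure hPhi hmu hmuS Si0) raddf0.
    split => // i Si ni; have -> : (q + 2).-1 = (q + 1)%N by rewrite addn2 addn1.
    by rewrite mcoeff_map_mpoly (fact_b hq hqK hdeg hpure hPhi hmu hmuS Si0 Si ni) raddf0.
  - move=> [mu]; rewrite mP => hmu hmuS.
    have hmuS' : pureb (predC (predC S)) mu by rewrite pureb_CC.
    have nSj0' : (predC S) j0 by [].
    rewrite !mcoeff_map_mpoly -raddfMn (fact_a hq hdeg hpure' hPhi hmu hmuS' nSj0') raddf0.
    split => // i Si ni; have -> : (q + 2).-1 = (q + 1)%N by rewrite addn2 addn1.
    by rewrite mcoeff_map_mpoly (fact_b hq hqK hdeg hpure' hPhi hmu hmuS' nSj0' Si ni) raddf0.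
pose x i := (map_mpoly f (tnth (lin_subst A) i)).@[y].
have hx : forall i, x i = \sum_j f (A i j) * y j.
  by move=> i; rewrite /x tnth_mktuple map_lin_eval.
pose w i := (map_mpoly f (mderiv i F)).@[x].
have dP : forall k, \sum_i f (A i k) * w i = 0.
  move=> k; rewrite -[RHS](dPy k) /P -map_mderiv /F' chain map_sumZ_eval.
  by apply: eq_bigr => i _; rewrite map_comp_eval.
have hPx : (map_mpoly f F).@[x] = 0 by rewrite -Py /P /F' map_comp_eval.
pose B := map_mx f A.
have hB : B \in unitmx by rewrite map_unitmx.
have hw : forall i, w i = 0.
  pose rv := \row_i w i.
  have h : rv *m B = 0.
    apply/rowP => k; rewrite !mxE -[RHS](dP k); apply: eq_bigr => i _.
    by rewrite !mxE mulrC.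
  move=> i; have : rv = 0 by rewrite -[rv](mulmxK hB) h mul0mx.
  by move/rowP/(_ i); rewrite !mxE.
apply: (hsm Lc f x); last by split => // i; exact: hw.
case: (boolP [exists i, x i != 0]) => [/existsP //|/existsPn hx0].
exfalso; pose cv := \col_j y j.
have h : B *m cv = 0.
  apply/colP => i; rewrite !mxE; have := hx0 i; rewrite negbK hx => /eqP e.
  by rewrite -[RHS]e; apply: eq_bigr => j _; rewrite !mxE.
have : cv = 0 by rewrite -[cv](mulKmx hB) h mulmx0.
move/colP => cv0; case: ynz => i; have := cv0 i; rewrite !mxE => ->.
by rewrite eqxx.
Qed.
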